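(* Let $n$ be the number of validators and $f\in[0,n]$, and allow checkpoints to be finalized also via acknowledgment messages. If two conflicting chains are finalized according to any two respective views, then at least $\frac{n}{3}$ validators can be detected (from the messages in those views) to have violated either $\mathbf{E_1}$, $\mathbf{E_2}$, or $\mathbf{E_3}$.
   Context: Chains are identified with their last block (a block is $(b,p)$ with $p$ its slot, genesis $B_{\text{genesis}}$ has slot $-1$); $\chi.p$ is the slot of the last block; $\preceq$ is the prefix relation; chains conflict if neither is a prefix of the other. A view is a set of messages. Checkpoints $\mathcal{C}=(\chi,c)$. An FFG-vote $\mathcal{C}_1\to\mathcal{C}_2$ (carried in VOTE messages) is valid iff $\mathcal{C}_1.c<\mathcal{C}_2.c$ and $\mathcal{C}_1.\chi\preceq\mathcal{C}_2.\chi$. In a view $\mathcal{V}$: $\mathcal{C}$ is justified iff $\mathcal{C}=(B_{\text{genesis}},0)$ or there are VOTE messages in $\mathcal{V}$ from at least $\frac{2}{3}n$ distinct validators with valid FFG-votes $\mathcal{S}\to\mathcal{T}$, $\mathcal{S}$ justified in $\mathcal{V}$, $\mathcal{S}.\chi\preceq\mathcal{C}.\chi\preceq\mathcal{T}.\chi$, $\mathcal{T}.c=\mathcal{C}.c$. $\mathcal{C}$ is finalized iff (i) $\mathcal{C}=(B_{\text{genesis}},0)$, or (ii) $\mathcal{C}$ is justified and there are VOTE messages from at least $\frac{2}{3}n$ distinct validators with valid FFG-votes $\mathcal{C}\to\mathcal{T}$, $\mathcal{T}.c=\mathcal{C}.c+1$, or (iii) (finalization via acknowledgments) $\mathcal{C}$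 is justified and $\mathcal{V}$ contains acknowledgment messages $[\textsc{ack},\mathcal{C},t,v_i]$ (where $\mathcal{C}.c=t$) from at least $\frac{2}{3}n$ distinct validators. A chain is finalized according to $\mathcal{V}$ iff it is a prefix of the chain of a checkpoint finalized in $\mathcal{V}$. Preorder: $\mathcal{C}\le\mathcal{C}'$ iff $\mathcal{C}.c<\mathcal{C}'.c$ or ($\mathcal{C}.c=\mathcal{C}'.c$ and $\mathcal{C}.\chi.p\le\mathcal{C}'.\chi.p$); $<$ its strict part. Slashing conditions: for two distinct FFG-votes $\mathcal{C}_1\to\mathcal{C}_2$, $\mathcal{C}_3\to\mathcal{C}_4$ sent by the same validator, $\mathbf{E_1}$: $\mathcal{C}_2.c=\mathcal{C}_4.c$; $\mathbf{E_2}$: $\mathcal{C}_3<\mathcal{C}_1$ and $\mathcal{C}_2.c<\mathcal{C}_4.c$. $\mathbf{E_3}$: a validator has sent an FFG-vote $\mathcal{C}_1\to\mathcal{C}_2$ and an acknowledgment for $\mathcal{C}_a$ with $\mathcal{C}_1<\mathcal{C}_a$ and $\mathcal{C}_a.c<\mathcal{C}_2.c$. *)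

(* Defs.v *)
From mathcomp Require Import all_boot all_order all_algebra.
Set Implicit Arguments.
Unset Strict Implicit.
Unset Printing Implicit Defensive.

Section Model.

(* B : type of block payloads; n : number of validators (validators = 'I_n). *)
Variable B : Type.
Variable n : nat.

(* A block is (b, p) with p its slot (p >= 0 for non-genesis blocks).
   A chain is the sequence of its non-genesis blocks, from genesis onwards
   (the genesis block B_genesis, slot -1, is implicit); slots are strictly
   increasing along a chain. *)
Definition block := (B * nat)%type.
Definition chain := { s : seq block | sorted ltn (map snd s) }.

Definition genesis_chain : chain := exist _ [::] isT.

Definition chain_slot (ch : chain) : int :=
  match rev (val ch) with
  | [::] => (- 1)%R
  | bl :: _ => Posz bl.2
  end.

Definition prefix (ch1 ch2 : chain) : Prop :=
  exists s, val ch2 = val ch1 ++ s.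

Definition conflicting (ch1 ch2 : chain) : Prop :=
  ~ prefix ch1 ch2 /\ ~ prefix ch2 ch1.

Record checkpoint := Checkpoint { cp_chain : chain; cp_c : nat }.

Definition genesis_cp : checkpoint := Checkpoint genesis_chain 0.

Inductive message :=
  | Vote (v : 'I_n) (slot : nat) (head : chain) (src tgt : checkpoint)
  | Ack (v : 'I_n) (C : checkpoint) (t : nat).

Definition view := message -> Prop.

Definition view_union (V1 V2 : view) : view := fun m => V1 m \/ V2 m.

Definition valid_ffg (C1 C2 : checkpoint) : Prop :=
  (cp_c C1 < cp_c C2)%N /\ prefix (cp_chain C1) (cp_chain C2).

Definition supermajority (Q : {set 'I_n}) : Prop := (2 * n <= 3 * #|Q|)%N.

Inductive justified (V : view) : checkpoint -> Prop :=
  | justified_genesis : justified V genesis_cp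
  | justified_votes (C : checkpoint) :
      (exists Q : {set 'I_n}, supermajority Q /\
         forall v, v \in Q ->
           exists (s : nat) (hd : chain) (S T : checkpoint),
             V (Vote v s hd S T) /\ valid_ffg S T /\ justified V S /\
             prefix (cp_chain S) (cp_chain C) /\
             prefix (cp_chain C) (cp_chain T) /\
             cp_c T = cp_c C) ->
      justified V C.

Definition finalized (V : view) (C : checkpoint) : Prop :=
  C = genesis_cp
  \/ (justified V C /\
      exists Q : {set 'I_n}, supermajority Q /\
        forall v, v \in Q ->
          exists (s : nat) (hd : chain) (T : checkpoint),
            V (Vote v s hd C T) /\ valid_ffg C T /\ cp_c T = (cp_c C).+1)
  \/ (justified V C /\
      exists Q : {set 'I_n}, supermajority Q /\
        forall v, v \in Q -> V (Ack v C (cp_c C))).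

Definition chain_finalized (V : view) (ch : chain) : Prop :=
  exists C, finalized V C /\ prefix ch (cp_chain C).

Definition cp_le (C C' : checkpoint) : Prop :=
  (cp_c C < cp_c C')%N \/
  (cp_c C = cp_c C' /\ (chain_slot (cp_chain C) <= chain_slot (cp_chain C'))%R).

Definition cp_lt (C C' : checkpoint) : Prop := cp_le C C' /\ ~ cp_le C' C.

Definition sent_ffg (V : view) (v : 'I_n) (C1 C2 : checkpoint) : Prop :=
  exists (s : nat) (hd : chain), V (Vote v s hd C1 C2).

Definition sent_ack (V : view) (v : 'I_n) (Ca : checkpoint) : Prop :=
  exists t : nat, V (Ack v Ca t).

Definition violates_E1 (V : view) (v : 'I_n) : Prop :=
  exists C1 C2 C3 C4, sent_ffg V v C1 C2 /\ sent_ffg V v C3 C4 /\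
    (C1, C2) <> (C3, C4) /\ cp_c C2 = cp_c C4.

Definition violates_E2 (V : view) (v : 'I_n) : Prop :=
  exists C1 C2 C3 C4, sent_ffg V v C1 C2 /\ sent_ffg V v C3 C4 /\
    (C1, C2) <> (C3, C4) /\ cp_lt C3 C1 /\ (cp_c C2 < cp_c C4)%N.

Definition violates_E3 (V : view) (v : 'I_n) : Prop :=
  exists C1 C2 Ca, sent_ffg V v C1 C2 /\ sent_ack V v Ca /\
    cp_lt C1 Ca /\ (cp_c Ca < cp_c C2)%N.

Definition slashable (V : view) (v : 'I_n) : Prop :=
  violates_E1 V v \/ violates_E2 V v \/ violates_E3 V v.

End Model.

(* Main.v *)
Require Import Defs.
From mathcomp Require Import all_boot all_order all_algebra.
From mathcomp Require Import zify.
From Stdlib Require Import Classical.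
Import Defs.

Section Proofs.
Variable B : Type.
Variable n : nat.

Lemma prefix_refl (a : chain B) : prefix a a.
Proof. by exists [::]; rewrite cats0. Qed.

Lemma prefix_trans (a b c : chain B) : prefix a b -> prefix b c -> prefix a c.
Proof. by move=> [s Hs] [t Ht]; exists (s ++ t); rewrite Ht Hs catA. Qed.

Lemma prefix_gen (a : chain B) : prefix (genesis_chain B) a.
Proof. by exists (val a). Qed.

Lemma seq_common {T : Type} {a b s t : seq T} :
  a ++ s = b ++ t -> (exists u, b = a ++ u) \/ (exists u, a = b ++ u).
Proof.
elim: a b s t => [|x a IH] b s t H; first by left; exists b.
case: b H => [|y b] H; first by right; exists (x :: a).
case: H => -> /IH [[u ->]|[u ->]]; [left|right]; by exists u.
Qed.

Lemma prefix_common (a b c : chain B) :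
  prefix a c -> prefix b c -> prefix a b \/ prefix b a.
Proof.
move=> [s Hs] [t Ht]; rewrite Hs in Ht.
by case: (seq_common Ht) => [[u Hu]|[u Hu]]; [left|right]; exists u.
Qed.

Lemma slot_lt (a b : chain B) :
  prefix a b -> val a <> val b -> (chain_slot a < chain_slot b)%R.
Proof.
case: a => sa Ha; case: b => sb Hb [s /= Hs] Hne.
rewrite /chain_slot /=.
case/lastP: s Hs Hne => [|s' y] Hs Hne; first by rewrite cats0 in Hs; rewrite Hs in Hne.
subst sb; rewrite -rcons_cat rev_rcons.
case/lastP: sa Ha Hb Hne => [|a' x] Ha Hb Hne.
  by apply: (@Order.POrderTheory.lt_le_trans _ _ 0%R).
rewrite rev_rcons ltz_nat.
move: Hb; rewrite sorted_pairwise; last by move=> ???; apply: ltn_trans.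
rewrite map_cat pairwise_cat => /and3P [/allrelP H _ _].
apply: H; by rewrite map_rcons mem_rcons inE eqxx.
Qed.

Arguments prefix_trans {a b c}.
Arguments prefix_common {a b c}.
Arguments slot_lt {a b}.

Lemma cp_total (C D : checkpoint B) : cp_le C D \/ cp_lt D C.
Proof.
rewrite /cp_lt /cp_le.
case: (classic (cp_le C D)) => H; first by left.
right; split => //.
move: H; rewrite /cp_le => H.
have [h1|h1|h1] := ltngtP (cp_c C) (cp_c D).
- by exfalso; apply: H; left.
- by left.
- right; split => //.
  case: (Order.TotalTheory.leP (chain_slot (cp_chain C)) (chain_slot (cp_chain D))) => h2.
  + by exfalso; apply: H; right.
  + by apply: Order.POrderTheory.ltW.
Qed.

Lemma quorum_inter (Q1 Q2 : {set 'I_n}) :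
  supermajority Q1 -> supermajority Q2 -> (n <= 3 * #|Q1 :&: Q2|)%N.
Proof.
rewrite /supermajority => h1 h2.
have h4 := cardsUI Q1 Q2.
have h3 : (#|Q1 :|: Q2| <= n)%N by exact: (leq_trans (max_card _) (eq_leq (card_ord n))).
lia.
Qed.


Definition finq (V : view B n) (F : checkpoint B) : Prop :=
  (exists Q : {set 'I_n}, supermajority Q /\
        forall v, v \in Q ->
          exists (s : nat) (hd : chain B) (T : checkpoint B),
            V (Vote v s hd F T) /\ valid_ffg F T /\ cp_c T = (cp_c F).+1)
  \/ (exists Q : {set 'I_n}, supermajority Q /\
        forall v, v \in Q -> V (Ack v F (cp_c F))).

Lemma fin_inv (V : view B n) F ch :
  finalized V F -> ~ prefix (cp_chain F) ch -> justified V F /\ finq V F.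
Proof.
rewrite /finalized /finq => [[->|[[hj hq]|[hj hq]]]] hn.
- by exfalso; apply: hn; apply: prefix_gen.
- by split => //; left.
- by split => //; right.
Qed.

Lemma just_inv (V : view B n) C : justified V C -> C = genesis_cp B \/
      (exists Q : {set 'I_n}, supermajority Q /\
         forall v, v \in Q ->
           exists (s : nat) (hd : chain B) (S T : checkpoint B),
             V (Vote v s hd S T) /\ valid_ffg S T /\ justified V S /\
             prefix (cp_chain S) (cp_chain C) /\
             prefix (cp_chain C) (cp_chain T) /\
             cp_c T = cp_c C).
Proof. by case=> [|C' H]; [left|right]. Qed.

Lemma core (W V1 V2 : view B n) (H1 : forall m, V1 m -> W m)
  (H2 : forall m, V2 m -> W m) (F : checkpoint B) (HFj : justified V1 F)
  (Hfin : finq V1 F) :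
  forall k (C : checkpoint B), cp_c C = k -> justified V2 C -> cp_le F C ->
  ~ prefix (cp_chain F) (cp_chain C) ->
  exists Q : {set 'I_n}, (n <= 3 * #|Q|)%N /\
    forall v, v \in Q -> slashable W v.
Proof.
elim/ltn_ind => k IH C HCk HCj HFC HnFC.
case: HCj HCk HFC HnFC => [|C' [QC [HQC HvC]]] HCk HFC HnFC.
  exfalso; apply: HnFC.
  case: (classic (val (cp_chain F) = [::])) => e.
    by exists [::]; rewrite e.
  have hlt := slot_lt (prefix_gen (cp_chain F)) (fun h : val (genesis_chain B) = val (cp_chain F) => e (esym h)).
  case: HFC => [//|[_ h]].
  by have := Order.POrderTheory.lt_le_trans hlt h; rewrite Order.POrderTheory.ltxx.
have [hk|hk|hk] := ltngtP (cp_c F) k.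
-
  case: (classic (exists v, v \in QC /\ exists s hd S T, V2 (Vote v s hd S T) /\
     valid_ffg S T /\ justified V2 S /\ prefix (cp_chain S) (cp_chain C') /\
     prefix (cp_chain C') (cp_chain T) /\ cp_c T = cp_c C' /\ cp_le F S /\
     ~ prefix (cp_chain F) (cp_chain S))).
    case=> v [_ [s [hd [S [T [_ [[hST _] [jS [pSC [_ [cT [hFS hnFS]]]]]]]]]]]].
    apply: (IH (cp_c S) _ S) => //.
    by rewrite -HCk -cT.
  move=> Hno.
  have Hv : forall v, v \in QC -> exists s hd S T, V2 (Vote v s hd S T) /\
     cp_lt S F /\ cp_c T = cp_c C'.
    move=> v vC.
    have [s [hd [S [T [HV [hval [jS [pSC [pCT cT]]]]]]]]] := HvC v vC.
    exists s, hd, S, T; split => //; split => //.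
    case: (cp_total F S) => // hFS.
    exfalso; apply: Hno; exists v; split => //.
    exists s, hd, S, T; do 6 (split => //); split => // pFS.
    by apply: HnFC; apply: prefix_trans pFS pSC.
  case: Hfin => [[Q1 [HQ1 Hv1]] | [Q1 [HQ1 Hv1]]];
    exists (Q1 :&: QC); (split; first exact: quorum_inter);
    move=> v; rewrite inE => /andP [v1 vC];
    have [s [hd [S [T [HV [hSF cT]]]]]] := Hv v vC.
    have [s1 [hd1 [T1 [HV1 [_ cT1]]]]] := Hv1 v v1.
    have neq : (F, T1) <> (S, T).
      case=> eF _; rewrite -eF in hSF.
      by case: hSF.
    have [h|h|h] := ltngtP (cp_c T) (cp_c F).+1.
    + exfalso; move: h; rewrite cT HCk ltnS leqNgt hk //.
    + right; left; exists F, T1, S, T.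
      split; first by exists s1, hd1; apply: H1.
      split; first by exists s, hd; apply: H2.
      by split => //; split => //; rewrite cT1.
    + left; exists F, T1, S, T.
      split; first by exists s1, hd1; apply: H1.
      split; first by exists s, hd; apply: H2.
      by split => //; rewrite cT1 h.
  right; right; exists S, T, F.
  split; first by exists s, hd; apply: H2.
  split; first by exists (cp_c F); apply: H1; apply: Hv1.
  by split => //; rewrite cT HCk.
- exfalso; case: HFC => [h|[h _]]; rewrite HCk in h.
    by move: h; rewrite ltnNge ltnW.
  by move: hk; rewrite h ltnn.
-
  have nCF : ~ prefix (cp_chain C') (cp_chain F).
    move=> hCF.
    case: (classic (val (cp_chain C') = val (cp_chain F))) => e.
      by apply: HnFC; exists [::]; rewrite e cats0.
    have hlt := slot_lt hCF e.
    case: HFC => [h|[_ h]]; first by move: h; rewrite HCk hk ltnn.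
    by have := Order.POrderTheory.lt_le_trans hlt h; rewrite Order.POrderTheory.ltxx.
  case: (just_inv _ _ HFj) => [eF|[QF [HQF HvF]]].
    by exfalso; apply: HnFC; rewrite eF; apply: prefix_gen.
  exists (QF :&: QC); split; first exact: quorum_inter.
  move=> v; rewrite inE => /andP [vF vC].
  have [s1 [hd1 [S1 [T1 [HV1 [_ [_ [_ [pFT1 cT1]]]]]]]]] := HvF v vF.
  have [s2 [hd2 [S2 [T2 [HV2 [_ [_ [_ [pCT2 cT2]]]]]]]]] := HvC v vC.
  left; exists S1, T1, S2, T2.
  split; first by exists s1, hd1; apply: H1.
  split; first by exists s2, hd2; apply: H2.
  split; last by rewrite cT1 cT2 HCk hk.
  case=> _ eT; rewrite -eT in pCT2.
  by case: (prefix_common pFT1 pCT2).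
Qed.

End Proofs.

Arguments prefix_trans {B a b c}.
Arguments prefix_common {B a b c}.
Arguments fin_inv {B n V F ch}.

Theorem lemmaB1 (B : Type) (n f : nat) (Hf : (f <= n)%N)
    (V1 V2 : view B n) (ch1 ch2 : chain B) :
  conflicting ch1 ch2 ->
  chain_finalized V1 ch1 ->
  chain_finalized V2 ch2 ->
  exists Q : {set 'I_n},
    (n <= 3 * #|Q|)%N /\
    forall v, v \in Q -> slashable (view_union V1 V2) v.
Proof.
move=> [hn12 hn21] [F1 [HF1 p1]] [F2 [HF2 p2]].
have nc12 : ~ prefix (cp_chain F1) (cp_chain F2).
  move=> h; by case: (prefix_common (prefix_trans p1 h) p2).
have nc21 : ~ prefix (cp_chain F2) (cp_chain F1).
  move=> h; by case: (prefix_common p1 (prefix_trans p2 h)).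
have [j1 q1] := fin_inv HF1 nc12.
have [j2 q2] := fin_inv HF2 nc21.
case: (cp_total _ F1 F2) => h.
  apply: (@core _ _ (view_union V1 V2) V1 V2 _ _ F1 j1 q1 (cp_c F2) F2) => //.
  - by move=> m hm; left.
  - by move=> m hm; right.
apply: (@core _ _ (view_union V1 V2) V2 V1 _ _ F2 j2 q2 (cp_c F1) F1) => //.
- by move=> m hm; right.
- by move=> m hm; left.
- by case: h.
Qed.
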